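(* Let $w=w_1\cdots w_n$ be a word of length $n\ge 3$, let $d\ge 1$, and let $G_w$ be any $(n,d)$-grid satisfying the rules below. Let $p\in[n]^d$ be a counter-point with $\tau_1(p)=r$. Then the number of directions $v\in\{-1,0,1\}^d\setminus\{\vec 0\}$ such that $\{p,p+v,\dots,p+(n-1)v\}\subseteq[n]^d$ and $G_w(p)G_w(p+v)\cdots G_w(p+(n-1)v)$ equals $w$ or $w$ reversed (i.e. the number of lines with initial point $p$ that contain $w$) is at least $(1-2e^{-c/10000})2^{r-1}$. If moreover $w_i=w_{n-i+1}$ for all $i$, this number is at least $(1-2e^{-c/10000})2^{r}$.
   Context: Let $[n]=\{1,\dots,n\}$. For $p\in[n]^d$ and $i\in[n]$ let $\pi_i(p)=|\{j\in[d]:p_j=i\}|$, $\tau_i(p)=\pi_i(p)+\pi_{n-i+1}(p)$, and $\sigma(p)=\sum_{1\le i\le n/2}\pi_i(p)$. Set $c=\frac{3.9d}{n+2}$ and $k=\frac{2.3d}{n+2}$. A point $p\in[n]^d$ is a counter-point if $c<\tau_1(p)<1.1c$ and $\frac{0.99(d-\tau_1(p))}{n-2}\le\pi_i(p)\le\frac{1.01(d-\tau_1(p))}{n-2}$ for all $1<i<n$. An $(n,d)$-grid is a function $G:[n]^d\to\Sigma$ into a set of letters. The grid $G_w$ is required to satisfy: if $\sigma(p)$ is odd, then $G_w(p)=w_1$ when $p$ is a counter-point, and $G_w(p)=w_i$ when $\tau_1(p)\le c$ and there is a unique integer $i$ with $1<i\le\lceil n/2\rceil$ and $\tau_i(p)\ge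 k$; if $\sigma(p)$ is even, then $G_w(p)=w_n$ when $p$ is a counter-point, and $G_w(p)=w_{n-i+1}$ when $\tau_1(p)\le c$ and there is a unique integer $i$ with $1<i\le\lceil n/2\rceil$ and $\tau_i(p)\ge k$; all other points are assigned arbitrary letters. *)

(* Defs.v *)
From HB Require Import structures.
From mathcomp Require Import all_boot all_order all_algebra.
From mathcomp Require Import reals sequences exp.
Set Implicit Arguments. Unset Strict Implicit. Unset Printing Implicit Defensive.
Import Order.TTheory GRing.Theory Num.Theory.
Local Open Scope ring_scope.

Definition point (d : nat) := {ffun 'I_d -> int}.

Definition in_grid (n d : nat) (p : point d) : bool :=
  [forall j, (1 <= p j)%R && (p j <= n%:Z)%R].

Definition pi_ (d : nat) (i : nat) (p : point d) : nat :=
  #|[set j : 'I_d | p j == i%:Z]|.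
Definition tau_ (n d : nat) (i : nat) (p : point d) : nat :=
  (pi_ i p + pi_ (n - i + 1) p)%N.
Definition sigma_ (n d : nat) (p : point d) : nat :=
  (\sum_(1 <= i < (n./2).+1) pi_ i p)%N.

Definition cst (R : realType) (n d : nat) : R := (39%:R / 10%:R) * d%:R / (n + 2)%N%:R.
Definition kst (R : realType) (n d : nat) : R := (23%:R / 10%:R) * d%:R / (n + 2)%N%:R.

Definition counter_point (R : realType) (n d : nat) (p : point d) : Prop :=
  [/\ in_grid n p,
      cst R n d < (tau_ n 1 p)%:R,
      (tau_ n 1 p)%:R < (11%:R / 10%:R) * cst R n d &
      forall i : nat, (1 < i < n)%N ->
        (99%:R / 100%:R : R) * ((d%:R - (tau_ n 1 p)%:R) / (n - 2)%N%:R) <= (pi_ i p)%:R /\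
        (pi_ i p)%:R <= (101%:R / 100%:R : R) * ((d%:R - (tau_ n 1 p)%:R) / (n - 2)%N%:R)].

(* The letter w_i (1-indexed) of a word w; x0 is an irrelevant default. *)
Definition letter (S : Type) (x0 : S) (w : seq S) (i : nat) : S := nth x0 w i.-1.

Definition Gw_rules (R : realType) (S : Type) (x0 : S) (w : seq S) (n d : nat)
    (G : point d -> S) : Prop :=
  forall p : point d, in_grid n p ->
  [/\ (odd (sigma_ n p) -> counter_point R n p -> G p = letter x0 w 1),
      (odd (sigma_ n p) -> forall i : nat,
         (tau_ n 1 p)%:R <= cst R n d ->
         (1 < i <= uphalf n)%N -> kst R n d <= (tau_ n i p)%:R ->
         (forall j : nat, (1 < j <= uphalf n)%N -> kst R n d <= (tau_ n j p)%:R -> j = i) ->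
         G p = letter x0 w i),
      (~~ odd (sigma_ n p) -> counter_point R n p -> G p = letter x0 w n) &
      (~~ odd (sigma_ n p) -> forall i : nat,
         (tau_ n 1 p)%:R <= cst R n d ->
         (1 < i <= uphalf n)%N -> kst R n d <= (tau_ n i p)%:R ->
         (forall j : nat, (1 < j <= uphalf n)%N -> kst R n d <= (tau_ n j p)%:R -> j = i) ->
         G p = letter x0 w (n - i + 1)%N)].

(* Directions v in {-1,0,1}^d, encoded by 'I_3 with k |-> k - 1. *)
Definition dir (d : nat) := {ffun 'I_d -> 'I_3}.
Definition dirval (d : nat) (v : dir d) (j : 'I_d) : int := (v j)%:Z - 1.
Definition is_zero_dir (d : nat) (v : dir d) : bool := [forall j, dirval v j == 0].

Definition line_pt (d : nat) (p : point d) (v : dir d) (t : nat) : point d :=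
  [ffun j => p j + t%:Z * dirval v j].

Definition good_dirs (S : eqType) (n d : nat) (G : point d -> S) (w : seq S)
    (p : point d) : {set dir d} :=
  [set v : dir d | [&& ~~ is_zero_dir v,
     all (fun t => in_grid n (line_pt p v t)) (iota 0 n) &
     let u := [seq G (line_pt p v t) | t <- iota 0 n] in (u == w) || (u == rev w)]].

(* Main.v *)
Require Import Defs.
From HB Require Import structures.
From mathcomp Require Import all_boot all_order all_algebra.
From mathcomp Require Import reals sequences exp.
From mathcomp Require Import ring lra zify.
Import Order.TTheory GRing.Theory Num.Theory.
Local Open Scope ring_scope.
Set Implicit Arguments. Unset Strict Implicit. Unset Printing Implicit Defensive.

Lemma binom_sets (R : realType) m (z : R) :
  \sum_(B : {set 'I_m}) z ^+ #|B| = (z + 1) ^+ m.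
Proof.
rewrite exprD1n (partition_big (fun B : {set 'I_m} => (inord #|B| : 'I_m.+1)) xpredT) //=.
apply: eq_bigr => k _.
have cB : forall B : {set 'I_m}, (#|B| < m.+1)%N.
  by move=> B; have := max_card (mem B); rewrite card_ord.
have E : forall B : {set 'I_m}, (inord #|B| == k :> 'I_m.+1) = (#|B| == k).
  move=> B; have hB := cB B.
  by rewrite -(inj_eq val_inj) /= inordK.
rewrite (eq_bigr (fun _ => z ^+ k)); last by move=> B /eqP <-; rewrite inordK.
rewrite sumr_const; congr (_ *+ _).
transitivity #|[set B : {set 'I_m} | #|B| == k]|.
  by apply: eq_card => B; rewrite !inE -E.
by rewrite card_draws card_ord.
Qed.

Lemma odd_sets m : (0 < m)%N -> (#|[set B : {set 'I_m} | odd #|B|]| * 2 = 2 ^ m)%N.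
Proof.
move=> m0; pose a0 : 'I_m := Ordinal m0.
pose f (B : {set 'I_m}) := if a0 \in B then B :\ a0 else a0 |: B.
have fK : involutive f.
  move=> B; rewrite /f; case: (boolP (a0 \in B)) => h.
    by rewrite !inE eqxx /= setD1K.
  by rewrite setU11 setU1K.
have finj : injective f := inv_inj fK.
have fodd : forall B, odd #|f B| = ~~ odd #|B|.
  move=> B; rewrite /f; case: (boolP (a0 \in B)) => h.
    rewrite -[in RHS](setD1K h) cardsU1 !inE eqxx /=; by case: (odd _).
  by rewrite cardsU1 h /=; case: (odd _).
set O := [set B : {set 'I_m} | odd #|B|].
have hc : #|O| = #|~: O|.
  rewrite -(card_imset _ finj); apply: eq_card => B; rewrite !inE.
  apply/imsetP/idP => [[C] | hB]; first by rewrite inE => hC ->; rewrite fodd hC.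
  by exists (f B); rewrite ?fK // inE fodd hB.
have cT : #|{: {set 'I_m}}| = (2 ^ m)%N.
  have := card_powerset [set: 'I_m]; rewrite cardsT card_ord => <-; apply: eq_card => B.
  by rewrite powersetE subsetT.
have := cardsC O; rewrite -hc cT => <-; by rewrite muln2 addnn.
Qed.

Lemma small_bound (R: realType) m :
  (#|[set B : {set 'I_m} | (4 * #|B| < m)%N]|)%:R <= (881/500 : R) ^+ m.
Proof.
pose y : R := 5/4; pose z : R := (y ^+ 4)^-1.
have y1 : 1 <= y by rewrite /y; lra.
have z0 : 0 <= z by rewrite /z invr_ge0 exprn_ge0 //; lra.
have -> : (881/500 : R) = y * (z + 1).
  by rewrite /z /y; field.
rewrite exprMn -binom_sets mulr_sumr -sum1_card natr_sum.
rewrite [X in _ <= X](bigID (fun B : {set 'I_m} => B \in [set B : {set 'I_m} | (4 * #|B| < m)%N])) /=.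
rewrite -[X in X <= _]addr0; apply: lerD; last by apply: sumr_ge0 => B _; rewrite mulr_ge0 ?exprn_ge0 //; lra.
apply: ler_sum => B; rewrite inE => hB.
have h4 : (4 * #|B| <= m)%N by apply: ltnW.
have hz : y ^+ (4 * #|B|) * z ^+ #|B| = 1.
  rewrite exprM -exprMn /z mulfV ?expr1n //.
  by rewrite expf_neq0 // /y; lra.
have -> : y ^+ m = y ^+ (m - 4 * #|B|) * y ^+ (4 * #|B|) by rewrite -exprD subnK.
rewrite -mulrA hz mulr1.
by rewrite exprn_ege1.
Qed.

Lemma small_exp (R : realType) m (c : R) : c <= m%:R ->
  (881/500 : R) ^+ m <= 2 ^+ m * expR (- (c / 10000%:R)).
Proof.
move=> cm.
pose e1 : R := expR (- (1 / 10000%:R)).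
have he1 : 1 - 1/10000%:R <= e1 by rewrite /e1; have := expR_ge1Dx (- (1 / 10000%:R) : R); lra.
apply: (@le_trans _ _ ((2 * e1) ^+ m)).
  have e10 : 0 <= e1 by rewrite /e1 expR_ge0.
  apply: lerXn2r; rewrite ?inE ?nnegrE; lra.
rewrite exprMn ler_pM2l ?exprn_gt0 // /e1 -expRM_natl ler_expR.
rewrite mulrN mulrA mulr1 lerN2 ler_pM2r //.
by rewrite invr_gt0 ltr0n.
Qed.

Lemma final_real (R : realType) m (c : R) (good small nodd : nat):
  (0 < m)%N -> c <= m%:R -> (small%:R <= (881/500:R)^+m) ->
  (nodd * 2 = 2^m)%N -> (nodd <= good + small)%N ->
  (1 - 2 * expR (- (c / 10000%:R))) * 2 ^+ (m - 1) <= good%:R.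
Proof.
move=> m0 cm hs hn hg.
have h1 := @small_exp R m c cm.
set e := expR _ in h1 *.
have h2 : (2 : R) ^+ m = 2 * 2 ^+ (m - 1) by rewrite -exprS subn1 prednK.
have hn' : (nodd%:R : R) = 2 ^+ (m - 1).
  apply: (@mulIf _ 2); first by rewrite pnatr_eq0.
  by rewrite -natrM hn natrX mulrC -h2.
have hg' : (nodd%:R : R) <= good%:R + small%:R by rewrite -natrD ler_nat.
rewrite h2 in h1.
have e0 : 0 <= e by rewrite /e expR_ge0.
nra.
Qed.

Lemma final_real2 (R : realType) m (c : R) (good small : nat):
  c <= m%:R -> (small%:R <= (881/500:R)^+m) ->
  (2^m <= good + small)%N ->
  (1 - 2 * expR (- (c / 10000%:R))) * 2 ^+ m <= good%:R.
Proof.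
move=> cm hs hg.
have h1 := @small_exp R m c cm.
set e := expR _ in h1 *.
have hg' : (2 ^+ m : R) <= good%:R + small%:R by rewrite -natrD -natrX ler_nat.
have e0 : 0 <= e by rewrite /e expR_ge0.
have p0 : (0 : R) <= 2 ^+ m by rewrite exprn_ge0.
nra.
Qed.

Lemma real_facts (R: realType) (d r m D E s : R): 1 <= m -> 0 < D -> d = (m+4) * D -> E * m = d - r ->
  39/10* D < r -> r < 11/10*(39/10* D) -> r <= 4 * s ->
  [/\ 2*(101/100 * E) < 23/10 * D, 23/10 * D <= 2*(99/100 * E) + s & r - s <= 39/10 * D].
Proof.
move=> m1 D0 dE Em rlo rhi rs; split.
- have h1 : E * m < (m + 1/10) * D by rewrite Em dE; lra.
  have h2 : (m + 1/10) * D <= (11/10 * D) * m by nra.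
  have h3 : E < 11/10 * D.
    have m0 : 0 < m by lra.
    by rewrite -(ltr_pM2r m0); lra.
  lra.
- set u := r - 39/10 * D.
  have hu : r = 39/10* D + u by rewrite /u; lra.
  have u0 : 0 < u by rewrite /u; lra.
  have u1 : u < 39/100 * D by rewrite /u; lra.
  have hmD : D <= m * D by nra.
  have hmu : 0 <= m * u by nra.
  have m0 : 0 < m by lra.
  have hs : r * m <= 4 * (s * m) by nra.
  suff : 23/10 * D * m <= (2*(99/100 * E) + s) * m by rewrite ler_pM2r.
  have -> : (2*(99/100 * E) + s) * m = 198/100 * (E * m) + s * m by ring.
  rewrite Em dE.
  have hs2 : (39/10 * D) * m + m * u <= 4 * (s * m).
    by have <- : r * m = (39/10 * D) * m + m * u by rewrite hu; ring.
  rewrite hu; nra.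
- lra.
Qed.

Definition o0 : 'I_3 := @Ordinal 3 0 isT.
Definition o1 : 'I_3 := @Ordinal 3 1 isT.
Definition o2 : 'I_3 := @Ordinal 3 2 isT.

Definition vT d (p : point d) (T : {set 'I_d}) : dir d :=
  [ffun j => if j \in T then (if p j == 1 then o2 else o0) else o1].

Lemma vT_inj d (p : point d) : injective (vT p).
Proof.
move=> T1 T2 /ffunP h; apply/setP => j; have := h j; rewrite !ffunE.
by case: (j \in T1); case: (j \in T2); case: (p j == 1).
Qed.

Lemma line_vT d (p : point d) T t j :
  line_pt p (vT p T) t j =
  if j \in T then (if p j == 1 then p j + t%:Z else p j - t%:Z) else p j.
Proof.
rewrite /line_pt /dirval !ffunE.
case: (j \in T); last by rewrite /= subrr mulr0 addr0.
by case: (p j == 1); rewrite /= ?mulr1 // mulrN1.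
Qed.

Lemma cardsum d (X : {set 'I_d}) : #|X| = (\sum_j (j \in X : nat))%N.
Proof. by rewrite -sum1_card big_mkcond /=; apply: eq_bigr => j _; case: (j \in X). Qed.

Definition P1 d (p : point d) := [set j | p j == 1].
Definition Pn n d (p : point d) := [set j | p j == n%:Z].

Lemma pi_line n d (p : point d) (T : {set 'I_d}) t i :
  (1 < n)%N -> (t < n)%N -> T \subset P1 p :|: Pn n p ->
  let q := line_pt p (vT p T) t in
  let a := #|T :&: P1 p| in let b := #|T :&: Pn n p| in
  (pi_ i q + (i == 1%N) * a + (i == n) * b = pi_ i p + (i == t.+1) * a + (i == n - t) * b)%N.
Proof.
move=> n1 tn sT q a b.
rewrite /pi_ /a /b !cardsum !big_distrr /= -!big_split /=; apply: eq_bigr => j _.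

rewrite /P1 /Pn !inE /q line_vT.
case: (boolP (j \in T)) => hj /=; last by rewrite !muln0 !addn0.
have := subsetP sT j hj; rewrite !inE.
case: (boolP (p j == 1)) => h1 /=.
  have hn : (p j == n%:Z) = false by rewrite (eqP h1) -[1]/(Posz 1) eqz_nat; apply/negbTE; rewrite neq_ltn n1.
  rewrite hn (eqP h1) -intS !eqz_nat !muln1 !muln0 !addn0.
  by move=> _; rewrite [(i == 1)%N]eq_sym [(i == t.+1)%N]eq_sym addnC.
move=> /eqP hn'; rewrite hn' subzn ?(ltnW tn) // !eqz_nat eqxx !muln1 !muln0 !addn0.
by rewrite [(i == n)%N]eq_sym [(i == n - t)%N]eq_sym addnC.
Qed.

Lemma sum_ind lo hi m : (\sum_(lo <= i < hi) (i == m : nat) = (lo <= m < hi))%N.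
Proof.
elim: hi => [|hi IH]; first by rewrite big_geq // ltn0 andbF.
case: (leqP lo hi) => h.
  rewrite big_nat_recr //= IH.
  rewrite ltnS; case: (ltngtP m hi) => hm /=; rewrite ?andbT ?andbF ?addn0 //.
  by rewrite hm h.
rewrite big_geq // ; case: (leqP lo m) => //= hm; by rewrite ltnNge (leq_trans h hm).
Qed.

Lemma sigma_line n d (p : point d) (T : {set 'I_d}) t :
  (2 < n)%N -> (t < n)%N -> T \subset P1 p :|: Pn n p ->
  let q := line_pt p (vT p T) t in
  let a := #|T :&: P1 p| in let b := #|T :&: Pn n p| in
  (sigma_ n q + a = sigma_ n p + (t.+1 <= n./2) * a + (n - t <= n./2) * b)%N.
Proof.
move=> n2 tn sT q a b.
have S : (\sum_(1 <= i < (n./2).+1) (pi_ i q + (i == 1%N) * a + (i == n) * b) =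
   \sum_(1 <= i < (n./2).+1) (pi_ i p + (i == t.+1) * a + (i == n - t) * b))%N.
  by apply: eq_bigr => i _; apply: (@pi_line n d p T t i (ltnW n2) tn sT).
rewrite !big_split -!big_distrl /= !sum_ind in S.
have h1 : (1 < (n./2).+1)%N by lia.
have h2 : (n < (n./2).+1)%N = false.
  by apply/negbTE; lia.
rewrite h1 h2 /= ltnS in S.
have h3 : (0 < n - t)%N by rewrite subn_gt0.
rewrite h3 andbF /= mul1n mul0n addn0 ltnS in S.
by rewrite /sigma_ S.
Qed.

Lemma card_split n d (p : point d) (T : {set 'I_d}) :
  (1 < n)%N -> T \subset P1 p :|: Pn n p -> #|T| = (#|T :&: P1 p| + #|T :&: Pn n p|)%N.
Proof.
move=> n1 sT; rewrite -(cardsID (P1 p) T); congr (_ + _)%N.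
apply: eq_card => j; rewrite !inE.
case: (boolP (j \in T)) => hj; rewrite ?andbF ?andbT //=.
have := subsetP sT j hj; rewrite !inE.
case: (boolP (p j == 1)) => h1 //=; rewrite (eqP h1) -[1]/(Posz 1) eqz_nat.
by move=> _; apply/esym/negbTE; rewrite neq_ltn n1.
Qed.

Lemma in_grid_line n d (p : point d) (T : {set 'I_d}) t :
  in_grid n p -> T \subset P1 p :|: Pn n p -> (t < n)%N ->
  in_grid n (line_pt p (vT p T) t).
Proof.
move=> /forallP g sT tn; apply/forallP => j; rewrite line_vT.
case: (boolP (j \in T)) => hj //.
have := subsetP sT j hj; rewrite !inE.
case: (boolP (p j == 1)) => h1 /=.
  by move=> _; rewrite (eqP h1); apply/andP; split; lia.
move=> /eqP ->; apply/andP; split; lia.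
Qed.

Lemma line0 d (p : point d) v : line_pt p v 0 = p.
Proof. by apply/ffunP => j; rewrite ffunE mul0r addr0. Qed.

Lemma pi_line' n d (p : point d) (T : {set 'I_d}) t i :
  (1 < n)%N -> (t < n)%N -> T \subset P1 p :|: Pn n p -> (1 < i < n)%N ->
  (pi_ i (line_pt p (vT p T) t) = pi_ i p + (i == t.+1) * #|T :&: P1 p| + (i == n - t) * #|T :&: Pn n p|)%N.
Proof.
move=> n1 tn sT /andP[i1 i2].
have := pi_line i n1 tn sT => /=.
by rewrite (gtn_eqF i1) (ltn_eqF i2) !mul0n !addn0.
Qed.

Lemma tau_line n d (p : point d) (T : {set 'I_d}) t j :
  (1 < n)%N -> (t < n)%N -> T \subset P1 p :|: Pn n p -> (1 < j < n)%N ->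
  tau_ n j (line_pt p (vT p T) t) = (tau_ n j p + ((j == t.+1) + (j == n - t)) * #|T|)%N.
Proof.
move=> n1 tn sT hj.
have hj' : (1 < n - j + 1 < n)%N by lia.
rewrite /tau_ (pi_line' n1 tn sT hj) (pi_line' n1 tn sT hj') (card_split n1 sT).
have -> : (n - j + 1 == t.+1)%N = (j == n - t)%N by apply/eqP/eqP; lia.
have -> : (n - j + 1 == n - t)%N = (j == t.+1)%N by apply/eqP/eqP; lia.
ring.
Qed.

Lemma tau1_gen n d (p : point d) (T : {set 'I_d}) t :
  (1 < n)%N -> (t < n)%N -> T \subset P1 p :|: Pn n p ->
  (tau_ n 1 (line_pt p (vT p T) t) + #|T|
   = tau_ n 1 p + ((1 == t.+1) + (n == t.+1)) * #|T :&: P1 p| + ((1 == n - t) + (n == n - t)) * #|T :&: Pn n p|)%N.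
Proof.
move=> n1 tn sT.
have e1 := pi_line 1 n1 tn sT; have en := pi_line n n1 tn sT; simpl in e1, en.
rewrite /tau_ subnK ?(ltnW n1) // (card_split n1 sT).
rewrite eqxx (gtn_eqF n1) eq_sym (gtn_eqF n1) /= in e1 en.
move: e1 en; case: (1 == t.+1)%N; case: (n == t.+1)%N; case: (1 == n - t)%N; case: (n == n - t)%N; rewrite /= ?mul1n ?mul0n; lia.
Qed.

Lemma tau1_int n d (p : point d) (T : {set 'I_d}) t :
  (1 < n)%N -> (0 < t)%N -> (t.+1 < n)%N -> T \subset P1 p :|: Pn n p ->
  (tau_ n 1 (line_pt p (vT p T) t) + #|T| = tau_ n 1 p)%N.
Proof.
move=> n1 t0 tn sT; rewrite (tau1_gen n1 (ltnW tn) sT).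
have -> : (1 == t.+1)%N = false by apply/negbTE; lia.
have -> : (n == t.+1)%N = false by apply/negbTE; lia.
have -> : (1 == n - t)%N = false by apply/negbTE; lia.
have -> : (n == n - t)%N = false by apply/negbTE; lia.
by rewrite !addn0.
Qed.

Lemma cp_end (R : realType) n d (p : point d) (T : {set 'I_d}) :
  (1 < n)%N -> T \subset P1 p :|: Pn n p -> counter_point R n p ->
  counter_point R n (line_pt p (vT p T) n.-1).
Proof.
move=> n1 sT [g h1 h2 h3].
have tn : (n.-1 < n)%N by rewrite prednK ?ltnSn //; lia.
have et : tau_ n 1 (line_pt p (vT p T) n.-1) = tau_ n 1 p.
  have := tau1_gen n1 tn sT; rewrite (card_split n1 sT) prednK; last by lia.
  have -> : (1 == n)%N = false by apply/negbTE; lia.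
  have -> : (n - n.-1 = 1)%N by lia.
  rewrite eqxx /=; lia.
have ep : forall i, (1 < i < n)%N -> pi_ i (line_pt p (vT p T) n.-1) = pi_ i p.
  move=> i hi; rewrite (pi_line' n1 tn sT hi).
  have -> : (i == n.-1.+1)%N = false by apply/negbTE; lia.
  have -> : (i == n - n.-1)%N = false by apply/negbTE; lia.
  by rewrite !addn0.
split; rewrite ?et //; first exact: in_grid_line.
by move=> i hi; rewrite ep //; exact: h3.
Qed.

Lemma cp_reals (R : realType) n d (p : point d) s :
  counter_point R n p -> (2 < n)%N -> (1 <= d)%N -> (tau_ n 1 p <= 4 * s)%N ->
  [/\ forall x y, (1 < x < n)%N -> (1 < y < n)%N -> ((pi_ x p + pi_ y p)%N%:R < kst R n d),
      forall x y, (1 < x < n)%N -> (1 < y < n)%N -> (kst R n d <= (pi_ x p + pi_ y p + s)%N%:R) &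
      forall u, (u + s = tau_ n 1 p)%N -> u%:R <= cst R n d].
Proof.
move=> [g h1 h2 h3] n2 d1 rs.
set r := tau_ n 1 p in h1 h2 h3 rs *.
pose m : R := (n - 2)%N%:R.
pose D : R := d%:R / (n + 2)%N%:R.
pose E : R := (d%:R - r%:R) / m.
have m1 : 1 <= m by rewrite /m ler1n; lia.
have N0 : (0 : R) < (n + 2)%N%:R by rewrite ltr0n; lia.
have D0 : 0 < D by rewrite /D divr_gt0 // ltr0n.
have dE : (d%:R : R) = (m + 4) * D.
  rewrite /D /m -[4]/(4%N%:R : R) -natrD.
  have -> : (n - 2 + 4 = n + 2)%N by lia.
  by rewrite mulrC divfK // gt_eqF.
have Em : E * m = d%:R - r%:R by rewrite /E divfK // gt_eqF //; lra.
have cE : cst R n d = 39/10 * D by rewrite /cst /D mulrA.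
have kE : kst R n d = 23/10 * D by rewrite /kst /D mulrA.
rewrite cE in h1 h2; rewrite kE.
have rs' : (r%:R : R) <= 4 * s%:R by rewrite -[4]/(4%N%:R : R) -natrM ler_nat.
have [F1 F2 F3] := real_facts m1 D0 dE Em h1 h2 rs'.
split.
- move=> x y hx hy; have [hx1 hx2] := h3 x hx; have [hy1 hy2] := h3 y hy.
  rewrite natrD; rewrite -/E in hx1 hx2 hy1 hy2 *; lra.
- move=> x y hx hy; have [hx1 hx2] := h3 x hx; have [hy1 hy2] := h3 y hy.
  rewrite !natrD; rewrite -/E in hx1 hx2 hy1 hy2 *; lra.
- move=> u hu; rewrite cE.
  have : (u%:R : R) + s%:R = r%:R by rewrite -natrD hu.
  lra.
Qed.

Lemma i0_facts n t : (2 < n)%N -> (0 < t)%N -> (t.+1 < n)%N ->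
  let i0 := if (t.+1 <= uphalf n)%N then t.+1 else (n - t)%N in
  [/\ (1 < i0 <= uphalf n)%N, (1 < i0 < n)%N, (1 < n - i0 + 1 < n)%N,
      ((i0 == t.+1) + (i0 == n - t) > 0)%N &
      forall j, (1 < j <= uphalf n)%N -> j != i0 -> (j == t.+1)%N = false /\ (j == n - t)%N = false].
Proof.
move=> n2 t0 tn i0; rewrite /i0 uphalfE.
case: ifP => h.
  split; [lia | lia | lia | by rewrite eqxx |].
  move=> j hj hne; split; apply/negbTE; apply/eqP => e; move: hne; rewrite e ?eqxx //.
  by move/eqP; lia.
split; [lia | lia | lia | by rewrite eqxx addn1 |].
move=> j hj hne; split; apply/negbTE; apply/eqP => e; move: hne; rewrite e ?eqxx //.
by move/eqP; lia.
Qed.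

Lemma G_line (R : realType) (S : Type) (x0 : S) w n d (G : point d -> S) (p : point d) (T : {set 'I_d}) t :
  (2 < n)%N -> (1 <= d)%N -> Gw_rules R x0 w n G -> counter_point R n p ->
  T \subset P1 p :|: Pn n p -> (tau_ n 1 p <= 4 * #|T|)%N -> (t < n)%N ->
  let q := line_pt p (vT p T) t in
  let i0 := if (t.+1 <= uphalf n)%N then t.+1 else (n - t)%N in
  G q = if odd (sigma_ n q) then letter x0 w i0 else letter x0 w (n - i0 + 1).
Proof.
move=> n2 d1 rules cp sT rs tn q i0.
have n1 : (1 < n)%N by lia.
have gq : in_grid n q by apply: in_grid_line => //; case: cp.
have [r1 r2 r3 r4] := rules q gq.
case: (posnP t) => t0.
  have ei : i0 = 1%N by rewrite /i0 t0 uphalfE; case: ifP => //; lia.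
  have eqp : q = p by rewrite /q t0 line0.
  rewrite ei subnK; last by lia.
  case: (boolP (odd (sigma_ n q))) => ho /=; [apply: r1 | apply: r3] => //; by rewrite eqp.
case: (eqVneq t n.-1) => tn1.
  have ei : i0 = 1%N by rewrite /i0 tn1 prednK ?uphalfE; [case: ifP => //; lia | lia].
  have cq : counter_point R n q by rewrite /q tn1; apply: cp_end.
  rewrite ei subnK; last by lia.
  by case: (boolP (odd (sigma_ n q))) => ho /=; [apply: r1 | apply: r3].
have tn' : (t.+1 < n)%N by lia.
have [I1 I2 I3 I4 I5] := i0_facts n2 t0 tn'; rewrite -/i0 in I1 I2 I3 I4 I5.
have [C1 C2 C3] := cp_reals cp n2 d1 rs.
have T1 : (tau_ n 1 q)%:R <= cst R n d by apply: C3; apply: tau1_int.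
have K : kst R n d <= (tau_ n i0 q)%:R.
  apply: (le_trans (C2 _ _ I2 I3)); rewrite ler_nat /q (tau_line n1 tn sT I2) /tau_.
  rewrite leq_add2l; apply: leq_pmull; exact: I4.
have U : forall j, (1 < j <= uphalf n)%N -> kst R n d <= (tau_ n j q)%:R -> j = i0.
  move=> j hj hk; apply/eqP; apply: contraLR hk => hne.
  have [e1 e2] := I5 j hj hne.
  have hj' : (1 < j < n)%N by move: hj; rewrite uphalfE; lia.
  have hj'' : (1 < n - j + 1 < n)%N by lia.
  rewrite -ltNge /q (tau_line n1 tn sT hj') e1 e2 /= mul0n addn0.
  exact: C1.
case: (boolP (odd (sigma_ n q))) => ho /=; [apply: r2 | apply: r4] => //.
Qed.

Lemma parity_line n d (p : point d) (T : {set 'I_d}) t :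
  (2 < n)%N -> (t < n)%N -> T \subset P1 p :|: Pn n p -> odd #|T| -> t.+1 != (n - t)%N ->
  odd (sigma_ n (line_pt p (vT p T) t)) = odd (sigma_ n p) (+) (uphalf n < t.+1)%N.
Proof.
move=> n2 tn sT hs hm.
have E := sigma_line n2 tn sT; simpl in E.
rewrite (card_split (ltnW n2) sT) oddD in hs.
move: hs E; set a := #|T :&: P1 p|; set b := #|T :&: Pn n p| => hs E.
have hm' : t.+1 <> (n - t)%N by apply/eqP.
case: (leqP t.+1 n./2) => h1.
  have h2 : (n - t <= n./2)%N = false by apply/negbTE; lia.
  have h3 : (uphalf n < t.+1)%N = false by apply/negbTE; rewrite uphalfE; lia.
  rewrite h1 h2 h3 /= ?mul1n ?mul0n ?addn0 in E *; rewrite addbF.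
  by have := congr1 odd E; rewrite !oddD => /addIb.
have h1' : (t < n./2)%N = false by apply/negbTE; lia.
have h2 : (n - t <= n./2)%N = true by lia.
have h3 : (uphalf n < t.+1)%N = true by rewrite uphalfE; lia.
rewrite h1' h2 h3 /= ?mul1n ?mul0n ?addn0 in E *.
have := congr1 odd E; rewrite !oddD; move: hs.
by case: (odd a); case: (odd b); case: (odd (sigma_ n _)); case: (odd (sigma_ n p)).
Qed.

Lemma Gq_odd (R : realType) (S : Type) (x0 : S) w n d (G : point d -> S) (p : point d) (T : {set 'I_d}) t :
  (2 < n)%N -> (1 <= d)%N -> Gw_rules R x0 w n G -> counter_point R n p ->
  T \subset P1 p :|: Pn n p -> (tau_ n 1 p <= 4 * #|T|)%N -> odd #|T| -> (t < n)%N ->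
  G (line_pt p (vT p T) t) = if odd (sigma_ n p) then letter x0 w t.+1 else letter x0 w (n - t).
Proof.
move=> n2 d1 rules cp sT rs ho tn.
rewrite (G_line (x0:=x0) n2 d1 rules cp sT rs tn) /=.
case: (eqVneq t.+1 (n - t)%N) => hm.
  have -> : (if (t.+1 <= uphalf n)%N then t.+1 else (n - t)%N) = t.+1.
    by rewrite uphalfE; case: ifP => //; lia.
  have -> : (n - t.+1 + 1 = t.+1)%N by lia.
  by rewrite -hm; case: ifP; case: ifP.
rewrite (parity_line n2 tn sT ho hm).
case: (leqP t.+1 (uphalf n)) => h.
  have -> : (n - t.+1 + 1 = n - t)%N by lia.
  by rewrite addbF.
rewrite addbT.
have -> : (n - (n - t) + 1 = t.+1)%N by lia.
by case: (odd (sigma_ n p)).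
Qed.

Lemma Gq_pal (R : realType) (S : Type) (x0 : S) w n d (G : point d -> S) (p : point d) (T : {set 'I_d}) t :
  (2 < n)%N -> (1 <= d)%N -> Gw_rules R x0 w n G -> counter_point R n p ->
  T \subset P1 p :|: Pn n p -> (tau_ n 1 p <= 4 * #|T|)%N ->
  (forall i : nat, (1 <= i <= n)%N -> letter x0 w i = letter x0 w (n - i + 1)) -> (t < n)%N ->
  G (line_pt p (vT p T) t) = letter x0 w t.+1.
Proof.
move=> n2 d1 rules cp sT rs hp tn.
have e : letter x0 w (n - t) = letter x0 w t.+1.
  by rewrite hp; [congr letter; lia | lia].
rewrite (G_line (x0:=x0) n2 d1 rules cp sT rs tn) /=.
case: (leqP t.+1 (uphalf n)) => _.
  have -> : (n - t.+1 + 1 = n - t)%N by lia.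
  by rewrite e; case: ifP.
have -> : (n - (n - t) + 1 = t.+1)%N by lia.
by rewrite e; case: ifP.
Qed.

Lemma good_mem (R : realType) (S : eqType) (x0 : S) w n d (G : point d -> S) (p : point d) (T : {set 'I_d}) :
  (2 < n)%N -> (1 <= d)%N -> size w = n -> Gw_rules R x0 w n G -> counter_point R n p ->
  T \subset P1 p :|: Pn n p -> (tau_ n 1 p <= 4 * #|T|)%N -> (0 < #|T|)%N ->
  (odd #|T| \/ (forall i : nat, (1 <= i <= n)%N -> letter x0 w i = letter x0 w (n - i + 1))) ->
  vT p T \in good_dirs n G w p.
Proof.
move=> n2 d1 sw rules cp sT rs T0 hor.
rewrite inE; apply/and3P; split.
- have [j hj] : exists j, j \in T by apply/set0Pn; rewrite -card_gt0.
  apply/negP => /forallP /(_ j); rewrite /dirval ffunE hj.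
  by case: (p j == 1).
- apply/allP => t; rewrite mem_iota => /andP[_ ht]; apply: in_grid_line => //; by case: cp.
set u := [seq _ | t <- _].
have su : size u = n by rewrite size_map size_iota.
have nthu : forall t, (t < n)%N -> nth x0 u t = G (line_pt p (vT p T) t).
  by move=> t ht; rewrite (nth_map 0%N) ?size_iota // nth_iota.
case: hor => [ho | hp].
  case: (boolP (odd (sigma_ n p))) => hsp; apply/orP; [left | right]; apply/eqP;
    apply: (eq_from_nth (x0 := x0)); rewrite ?size_rev ?su ?sw // => t ht;
    rewrite nthu // (Gq_odd (x0:=x0) n2 d1 rules cp sT rs ho ht) ?hsp /letter //.
  rewrite (negbTE hsp) nth_rev ?sw //; congr (nth _ _ _); lia.
apply/orP; left; apply/eqP; apply: (eq_from_nth (x0 := x0)); rewrite ?su ?sw // => t ht.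
by rewrite nthu // (Gq_pal (x0:=x0) n2 d1 rules cp sT rs hp ht).
Qed.

Lemma card_sets m : #|{: {set 'I_m}}| = (2 ^ m)%N.
Proof.
have := card_powerset [set: 'I_m]; rewrite cardsT card_ord => <-; apply: eq_card => B.
by rewrite powersetE subsetT.
Qed.

Lemma card_U_le (T : finType) (X Y : {set T}) : (#|X :|: Y| <= #|X| + #|Y|)%N.
Proof. by rewrite cardsU leq_subr. Qed.

Unset Implicit Arguments.

Theorem lemma21 (R : realType) (S : eqType) (x0 : S) (n d : nat) (w : seq S)
    (G : point d -> S) (p : point d) :
  (3 <= n)%N -> (1 <= d)%N -> size w = n ->
  Gw_rules R x0 w n G ->
  counter_point R n p ->
  let r := tau_ n 1 p in
  let N : R := (#|good_dirs n G w p|)%:R in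
  (1 - 2 * expR (- (cst R n d / 10000%:R))) * 2 ^+ (r - 1)%N <= N /\
  ((forall i : nat, (1 <= i <= n)%N -> letter x0 w i = letter x0 w (n - i + 1)) ->
   (1 - 2 * expR (- (cst R n d / 10000%:R))) * 2 ^+ r <= N).
Proof.
move=> n2 d1 sw rules cp r N.
set A := P1 p :|: Pn n p.
have cA : #|A| = r.
  rewrite /r /tau_ subnK; last by lia.
  rewrite cardsU.
  have -> : P1 p :&: Pn n p = set0.
    apply/setP => j; rewrite !inE; apply/negbTE; apply/negP => /andP[/eqP -> ].
    by rewrite -[1]/(Posz 1) eqz_nat => /eqP; lia.
  by rewrite cards0 subn0.
have c0 : 0 < cst R n d.
  rewrite /cst; apply: divr_gt0; [apply: mulr_gt0; [lra | by rewrite ltr0n] | by rewrite ltr0n addn2].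
have h1 : cst R n d < r%:R by case: cp.
have m0 : (0 < #|A|)%N by rewrite cA -(ltr0n R); apply: lt_trans h1.
pose e := fun i : 'I_#|A| => @enum_val _ (mem A) i.
have eA : forall i, e i \in A by move=> i; apply: enum_valP.
have einj : injective e by apply: enum_val_inj.
pose phi := fun B : {set 'I_#|A|} => vT p (e @: B).
have phiinj : injective phi by move=> B1 B2 /vT_inj; apply: imset_inj.
have cT : forall B : {set 'I_#|A|}, #|e @: B| = #|B| by move=> B; exact: (card_imset _ einj).
have sT : forall B : {set 'I_#|A|}, e @: B \subset A.
  by move=> B; apply/subsetP => _ /imsetP[i _ ->]; apply: eA.
have hG : forall B : {set 'I_#|A|}, ~~ (4 * #|B| < #|A|)%N ->
    (odd #|B| \/ (forall i : nat, (1 <= i <= n)%N -> letter x0 w i = letter x0 w (n - i + 1))) ->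
    phi B \in good_dirs n G w p.
  move=> B hB hor; apply: (good_mem n2 d1 sw rules cp (sT B)).
  - by rewrite cT -/r -cA leqNgt.
  - by rewrite cT; move: hB; rewrite -leqNgt; lia.
  - by case: hor => [h|h]; [left; rewrite cT | right].
set Small := [set B : {set 'I_#|A|} | (4 * #|B| < #|A|)%N].
have hS := small_bound R #|A|.
have cm : cst R n d <= #|A|%:R by rewrite cA ltW.
have Gle : forall Good : {set {set 'I_#|A|}}, (forall B, B \in Good -> phi B \in good_dirs n G w p) ->
   (#|Good| <= #|good_dirs n G w p|)%N.
  move=> Good hg; rewrite -(card_imset Good phiinj); apply: subset_leq_card.
  by apply/subsetP => _ /imsetP[B hB ->]; apply: hg.
split.
- set Good := [set B : {set 'I_#|A|} | odd #|B| && ~~ (4 * #|B| < #|A|)%N].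
  have hg : (#|Good| <= #|good_dirs n G w p|)%N.
    by apply: Gle => B; rewrite inE => /andP[ho hb]; apply: hG => //; left.
  have ho : (#|[set B : {set 'I_#|A|} | odd #|B|]| <= #|Good| + #|Small|)%N.
    apply: leq_trans (card_U_le _ _); apply: subset_leq_card; apply/subsetP => B.
    by rewrite !inE => ->; case: (4 * #|B| < #|A|)%N.
  have := final_real m0 cm hS (odd_sets m0) ho.
  move=> H; rewrite -cA; apply: (le_trans H); by rewrite /N ler_nat.
- move=> hp.
  set Good := [set B : {set 'I_#|A|} | ~~ (4 * #|B| < #|A|)%N].
  have hg : (#|Good| <= #|good_dirs n G w p|)%N.
    by apply: Gle => B; rewrite inE => hb; apply: hG => //; right.
  have ho : (2 ^ #|A| <= #|Good| + #|Small|)%N.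
    rewrite -card_sets; apply: leq_trans (card_U_le _ _); apply: subset_leq_card; apply/subsetP => B.
    by rewrite !inE; case: (4 * #|B| < #|A|)%N.
  have := final_real2 cm hS ho.
  move=> H; rewrite -cA; apply: (le_trans H); by rewrite /N ler_nat.
Qed.
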